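(* Let $x>3$ be an integer and let $\varepsilon:=s^-(3)$. Then $$\varepsilon+\log(2)\Big(\frac13+\frac14+\cdots+\frac1{x-1}\Big)\;\le\;s^-(x)\;\le\;\log(x-1).$$
   Context: A square is a nonempty word of the form $uu$; a word is square-free if no contiguous subword of it is a square. $\omega_n^-(x)$ is the number of square-free words of length $n$ over an $x$-letter alphabet and $s^-(x)=\lim_{n\to\infty}\frac1n\log\omega_n^-(x)$ (this limit exists). *)

(* Defs.v *)
From Stdlib Require Import Reals.
From Coquelicot Require Import Coquelicot.
From mathcomp Require Import all_boot.

Set Implicit Arguments.
Unset Strict Implicit.
Unset Printing Implicit Defensive.

Definition is_square {T : eqType} (v : seq T) : bool :=
  [&& (0 < size v)%N, ~~ odd (size v) & take (size v)./2 v == drop (size v)./2 v].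

Definition square_free {T : eqType} (w : seq T) : bool :=
  [forall i : 'I_(size w).+1, forall j : 'I_(size w).+1,
     (i <= j)%N ==> ~~ is_square (take (j - i)%N (drop i w))].

Definition omega_minus (n x : nat) : nat :=
  #|[set w : n.-tuple 'I_x | square_free (tval w)]|.

Definition s_minus (x : nat) : R :=
  real (Lim_seq (fun n => (ln (INR (omega_minus n x)) / INR n)%R)).

(* Main.v *)
Require Import Defs.
From Stdlib Require Import Reals Lra Lia Classical.
From Coquelicot Require Import Coquelicot.
From mathcomp Require Import all_boot zify.
Set Implicit Arguments. Unset Strict Implicit. Unset Printing Implicit Defensive.
Local Open Scope nat_scope.

Section SF.
Variable T : eqType.

Lemma is_squareP (v : seq T) : reflect (exists u, u != [::] /\ v = u ++ u) (is_square v).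
Proof.
apply: (iffP idP).
  case/and3P=> hp hodd /eqP he.
  exists (take (size v)./2 v); split.
    rewrite -size_eq0 size_take; case: ltnP => h.
      by rewrite -lt0n; move: hp hodd; case: (size v) => // [[|n]].
    by rewrite -lt0n.
  by rewrite {2}he cat_take_drop.
case=> u [hu ->]; rewrite /is_square size_cat addnn odd_double half_double.
rewrite take_size_cat // drop_size_cat // eqxx andbT /= andbT.
by rewrite -addnn addn_gt0 lt0n size_eq0 hu.
Qed.

Lemma sfP (s : seq T) :
  reflect (forall p u q, s = p ++ u ++ u ++ q -> u = [::]) (square_free s).
Proof.
apply: (iffP forallP).
  move=> H p u q hs; apply/eqP; apply: contraT => hu.
  have hi : size p < (size s).+1 by rewrite hs size_cat ltnS leq_addr.
  have hj : size p + (size u + size u) < (size s).+1.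
    by rewrite hs !size_cat ltnS !addnA leq_addr.
  move: (H (Ordinal hi)) => /forallP /(_ (Ordinal hj)) /=.
  rewrite leq_addr /= => H2; case/negP: H2; apply/is_squareP.
  exists u; split => //.
  rewrite addKn hs drop_size_cat // catA take_size_cat //.
  by rewrite size_cat.
move=> H i; apply/forallP => j; apply/implyP => hij; apply/negP.
case/is_squareP => u [hu he]; move/eqP: hu; apply.
apply: (H (take i s) u (drop j s)).
rewrite (catA u u) -he -{1}(cat_take_drop i s); congr (_ ++ _).
have hj : j <= size s by rewrite -ltnS.
by rewrite -{1}(cat_take_drop (j - i) (drop i s)) drop_drop subnK.
Qed.

Lemma sf_infix (p s q : seq T) : square_free (p ++ s ++ q) -> square_free s.
Proof.
move/sfP=> H; apply/sfP=> p' u q' hs; apply: (H (p ++ p') u (q' ++ q)).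
by rewrite hs -!catA.
Qed.

Lemma sf_prefix (s q : seq T) : square_free (s ++ q) -> square_free s.
Proof. by move=> h; exact: (@sf_infix [::] s q). Qed.
Lemma sf_suffix (p s : seq T) : square_free (p ++ s) -> square_free s.
Proof. by move=> h; apply: (@sf_infix p s [::]); rewrite cats0. Qed.
Lemma sf_take n (s : seq T) : square_free s -> square_free (take n s).
Proof. by rewrite -{1}(cat_take_drop n s); apply: sf_prefix. Qed.
Lemma sf_drop n (s : seq T) : square_free s -> square_free (drop n s).
Proof. by rewrite -{1}(cat_take_drop n s); apply: sf_suffix. Qed.
End SF.

Lemma card_le_inj (aT bT : finType) (A : {set aT}) (B : {set bT}) (f : aT -> bT) :
  {in A &, injective f} -> (forall a, a \in A -> f a \in B) -> #|A| <= #|B|.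
Proof.
move=> inj hf; rewrite -(card_in_imset inj); apply: subset_leq_card.
by apply/subsetP=> b /imsetP [a ha ->]; apply: hf.
Qed.

Definition sfc (T : finType) n := #|[set w : n.-tuple T | square_free w]|.

Lemma omegaE n x : omega_minus n x = sfc 'I_x n.
Proof. by []. Qed.

Lemma sfc0 (T : finType) : sfc T 0 = 1.
Proof.
rewrite /sfc (_ : [set w : 0.-tuple T | square_free w] = [set [tuple]]) ?cards1 //.
apply/setP=> t; rewrite !inE tuple0 eqxx.
by apply/sfP=> p u q /(congr1 size); rewrite /= !size_cat; case: u => //= a u; rewrite addnS.
Qed.

Lemma sfc_submult (T : finType) m n : sfc T (m + n) <= sfc T m * sfc T n.
Proof.
rewrite /sfc -cardsX.
have e1 : minn m (m + n) = m by apply/minn_idPl; apply: leq_addr.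
have e2 : m + n - m = n by rewrite addKn.
apply: (card_le_inj (f := fun t : (m+n).-tuple T =>
   (tcast e1 [tuple of take m t], tcast e2 [tuple of drop m t]))).
  move=> t1 t2 _ _ [] /(congr1 val) /= + /(congr1 val) /=.
  rewrite !val_tcast /= => h1 h2; apply: val_inj => /=.
  by rewrite -(cat_take_drop m t1) h1 h2 cat_take_drop.
move=> t; rewrite !inE /= !val_tcast /= => h.
by rewrite sf_take ?sf_drop.
Qed.

Lemma sfc_upper (T : finType) n : sfc T n.+2 <= (#|T|.-1) * sfc T n.+1.
Proof.
pose S := [set p : (n.+1).-tuple T * T | square_free p.1 && (p.2 != thead p.1)].
have -> : #|T|.-1 * sfc T n.+1 = #|S|.
  have -> : #|S| = \sum_(w : (n.+1).-tuple T) \sum_(c : T) (if (w,c) \in S then 1 else 0).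
    by rewrite pair_big /= -sum1_card big_mkcond /=; apply: eq_bigr; case.
  rewrite /sfc -sum1_card big_mkcond /= big_distrr /=; apply: eq_bigr => w _.
  rewrite inE /=; case hw: (square_free w) => /=.
    rewrite muln1 -(cardC1 (thead w)) -sum1_card big_mkcond /=.
    by apply: eq_bigr => c _; rewrite !inE /= hw.
  by rewrite muln0 big1 // => c _; rewrite inE /= hw.
apply: (card_le_inj (f := fun t : (n.+2).-tuple T => ([tuple of behead t], thead t))).
  move=> t1 t2 _ _ [] h1 h2; apply: val_inj.
  by rewrite (tuple_eta t1) (tuple_eta t2) /= h2 h1.
move=> t; rewrite !inE /= => h.
apply/andP; split; first by have := sf_drop 1 h; rewrite drop1.
case: t h => [[|a [|b s]] //= i] h.
rewrite /thead (tnth_nth a) /= (tnth_nth a) /=.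
apply/eqP=> hab; subst b.
by move/sfP: h => /(_ [::] [:: a] s erefl).
Qed.

Lemma card_bigcup_le (T : finType) n (F : nat -> {set T}) :
  #|\bigcup_(j < n) F j| <= \sum_(j < n) #|F j|.
Proof.
elim: n => [|n IH]; first by rewrite !big_ord0 cards0.
rewrite !big_ord_recr /= cardsU; apply: leq_trans (leq_subr _ _) _.
by rewrite leq_add2r.
Qed.

Lemma sf_not_ex (T : eqType) (s : seq T) : ~~ square_free s ->
  exists p u q, [/\ u != [::] & s = p ++ u ++ u ++ q].
Proof.
rewrite /square_free negb_forall => /existsP [i]; rewrite negb_forall => /existsP [j].
rewrite negb_imply negbK => /andP [hij /is_squareP [u [hu he]]].
exists (take i s), u, (drop j s); split => //.
rewrite (catA u u) -he -{1}(cat_take_drop i s); congr (_ ++ _).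
have hj : j <= size s by rewrite -ltnS.
by rewrite -{1}(cat_take_drop (j - i) (drop i s)) drop_drop subnK.
Qed.

Definition sqsuf (T : eqType) j (s : seq T) :=
  [&& 0 < j, j + j <= size s & take j (drop (size s - (j + j)) s) == drop (size s - j) s].

Lemma sqsuf_cat (T : eqType) (p u : seq T) : u != [::] -> sqsuf (size u) (p ++ u ++ u).
Proof.
move=> hu; rewrite /sqsuf lt0n size_eq0 hu !size_cat /= leq_addl /=.
rewrite addnK drop_size_cat // take_size_cat //.
rewrite (_ : size p + (size u + size u) - size u = size (p ++ u)); last by rewrite size_cat addnA addnK.
by rewrite catA drop_size_cat.
Qed.

Lemma bad_sqsuf (T : eqType) (w : seq T) c : square_free w -> ~~ square_free (rcons w c) ->
  exists2 j, j < (size w).+1 & sqsuf j (rcons w c).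
Proof.
move=> hw /sf_not_ex [p [u [q [hu he]]]].
case/lastP: q he => [|q y] he.
  exists (size u); last by rewrite he cats0; apply: sqsuf_cat.
  move/(congr1 size): he; rewrite size_rcons !size_cat /= addn0 => ->.
  have : 0 < size u by rewrite lt0n size_eq0.
  move=> h; lia.
rewrite -!rcons_cat in he; case/rcons_inj: he => he _.
by move/sfP: hw => /(_ p u q he) hu0; rewrite hu0 in hu.
Qed.

Lemma sum_rev_le (a : nat -> nat) n :
  \sum_(j < n.+1) (if 0 < j then a (n.+1 - j) else 0) <= \sum_(i < n.+1) a i.
Proof.
rewrite big_ord_recl /= add0n big_ord_recl /=.
apply: leq_trans (leq_addl _ _).
rewrite -(big_mkord predT (fun j => a (n.+1 - j.+1))) -(big_mkord predT (fun j => a j.+1)).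
rewrite big_nat_rev /= add0n; apply: eq_leq; apply: eq_big_nat => i /andP[_ hi].
by rewrite (_ : n.+1 - (n - i.+1).+1 = i.+1) //; lia.
Qed.

Lemma key_ineq (T : finType) n :
  #|T| * sfc T n <= sfc T n.+1 + \sum_(i < n.+1) sfc T i.
Proof.
pose P := [set p : n.-tuple T * T | square_free p.1].
pose G := [set p : n.-tuple T * T | square_free (rcons p.1 p.2)].
have hP : #|P| = #|T| * sfc T n.
  rewrite mulnC /sfc -cardsT -cardsX; apply: eq_card => -[w c].
  by rewrite !inE andbT.
have hG : #|P :&: G| <= sfc T n.+1.
  apply: (card_le_inj (f := fun p : n.-tuple T * T => [tuple of rcons p.1 p.2])).
    move=> [w1 c1] [w2 c2] _ _ /(congr1 val) /= /rcons_inj [h1 ->].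
    by congr (_, _); apply: val_inj.
  by move=> [w c]; rewrite !inE /= => /andP [].
pose B j := [set p : n.-tuple T * T | square_free p.1 && sqsuf j (rcons p.1 p.2)].
have hB : P :\: G \subset \bigcup_(j < n.+1) B j.
  apply/subsetP => -[w c]; rewrite !inE /= => /andP [hn hw].
  have [j hj hs] := bad_sqsuf hw hn.
  rewrite size_tuple in hj.
  by apply/bigcupP; exists (Ordinal hj) => //; rewrite inE hw hs.
have hBj : forall j : 'I_n.+1, #|B j| <= (if 0 < j then sfc T (n.+1 - j) else 0).
  move=> j; case: (posnP j) => hj /=.
    rewrite leqn0 cards_eq0; apply/eqP/setP => p; rewrite !inE /sqsuf hj /=.
    by rewrite andbF.
  have e1 : minn (n.+1 - j) n.+1 = n.+1 - j by apply/minn_idPl; apply: leq_subr.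
  apply: (card_le_inj (f := fun p : n.-tuple T * T =>
     tcast e1 [tuple of take (n.+1 - j) (rcons p.1 p.2)])).
    move=> [w1 c1] [w2 c2]; rewrite !inE /= => /andP [_ h1] /andP [_ h2] /(congr1 (@tval _ _)).
    rewrite !val_tcast /= => ht.
    suff : rcons w1 c1 = rcons w2 c2 by case/rcons_inj => /val_inj -> ->.
    have ex : forall s : seq T, size s = n.+1 -> sqsuf j s ->
        s = take (n.+1 - j) s ++ drop (n.+1 - (j + j)) (take (n.+1 - j) s).
      move=> s hs /and3P [_ hjj /eqP he]; rewrite hs in hjj he.
      rewrite -{1}(cat_take_drop (n.+1 - j) s); congr (_ ++ _).
      rewrite -he take_drop; congr (drop _ (take _ _)); clear -hjj; lia.
    have s1 : size (rcons w1 c1) = n.+1 by rewrite size_rcons size_tuple.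
    have s2 : size (rcons w2 c2) = n.+1 by rewrite size_rcons size_tuple.
    apply: (etrans (ex _ s1 h1)); rewrite ht; exact: (esym (ex _ s2 h2)).
  move=> [w c]; rewrite !inE /= val_tcast /= => /andP [hw _].
  rewrite -cats1 takel_cat; first by apply: sf_take.
  by rewrite size_tuple; clear -hj; lia.
have := cardsID G P; rewrite hP => <-.
rewrite leq_add // (leq_trans (subset_leq_card hB)) //.
apply: leq_trans (card_bigcup_le _ _) _.
apply: leq_trans (sum_rev_le (sfc T) n).
by apply: leq_sum => j _; apply: hBj.
Qed.

Lemma sfc_exp2 (T : finType) : 4 <= #|T| -> forall n, 2 ^ n <= sfc T n.
Proof.
move=> hT.
suff H : forall n, \sum_(i < n.+1) sfc T i <= 2 * sfc T n /\ 2 ^ n <= sfc T n.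
  by move=> n; case: (H n).
elim=> [|n [IH1 IH2]].
  by rewrite big_ord1 sfc0.
have k := key_ineq T n.
have h4 : 4 * sfc T n <= #|T| * sfc T n by rewrite leq_mul2r hT orbT.
have hn : 2 * sfc T n <= sfc T n.+1 by lia.
split; last by rewrite expnS; apply: leq_trans hn; rewrite leq_mul2l IH2 orbT.
rewrite big_ord_recr /=; apply: (leq_trans (leq_add IH1 (leqnn _))); clear -hn; lia.
Qed.

Section Ins.
Variables (T U : finType) (e : T -> U) (z : U).
Hypothesis e_inj : injective e.
Hypothesis ez : forall a, e a != z.

Fixpoint ins (w : seq T) (b : seq bool) : seq U :=
  match w, b with
  | a :: w', bit :: b' => e a :: (if bit then z :: ins w' b' else ins w' b')
  | _, _ => [::]
  end.

Lemma size_ins w b : size w = size b -> size (ins w b) = size b + count id b.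
Proof.
elim: w b => [|a w IH] [|bit b] //= [] /IH; case: bit => /= ->; lia.
Qed.

Lemma filter_ins w b : size w = size b -> filter (predC1 z) (ins w b) = map e w.
Proof.
elim: w b => [|a w IH] [|bit b] //= [] /IH h.
by rewrite /= ez; case: bit => /=; rewrite ?eqxx /= h.
Qed.

Fixpoint dec (s : seq U) : seq bool :=
  match s with
  | [::] => [::]
  | x :: s' => if x == z then dec s' else (ohead s' == Some z) :: dec s'
  end.

Lemma dec_ins w b : size w = size b -> dec (ins w b) = b.
Proof.
elim: w b => [|a w IH] [|bit b] //= [] hs.
rewrite (negbTE (ez a)); case: bit => /=; rewrite ?eqxx IH //.
by case: w b hs {IH} => [|a' w'] [|bit' b'] //= _; rewrite (inj_eq (@Some_inj _)) (negbTE (ez a')).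
Qed.

Fixpoint nozz (s : seq U) : bool :=
  match s with
  | x :: ((y :: _) as s') => ~~ ((x == z) && (y == z)) && nozz s'
  | _ => true
  end.

Lemma nozz_cons x s : nozz (x :: s) = ~~ ((x == z) && (ohead s == Some z)) && nozz s.
Proof. by case: s => [|y s] //=; rewrite andbF. Qed.

Lemma ohead_ins w b : ohead (ins w b) != Some z.
Proof.
case: w b => [|a w] [|bit b] //=.
by rewrite (inj_eq (@Some_inj _)) ez.
Qed.

Lemma nozz_ins w b : nozz (ins w b).
Proof.
elim: w b => [|a w IH] [|bit b] //.
rewrite [ins _ _]/= nozz_cons (negbTE (ez a)) /=.
case: bit => //; rewrite nozz_cons IH eqxx /= andbT.
exact: ohead_ins.
Qed.

Lemma nozz_cat p q : nozz (p ++ q) -> nozz q.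
Proof. by elim: p => // x p IH; rewrite cat_cons nozz_cons => /andP [_ /IH]. Qed.

Lemma nozz_zz p q : nozz (p ++ z :: z :: q) = false.
Proof.
apply/negP => /nozz_cat /=; by rewrite eqxx.
Qed.

Lemma sf_of_filter t : nozz t -> square_free (filter (predC1 z) t) -> square_free t.
Proof.
move=> hn /sfP hf; apply/sfP => p u q ht.
have := hf (filter (predC1 z) p) (filter (predC1 z) u) (filter (predC1 z) q).
rewrite ht !filter_cat => /(_ erefl) hu.
case: u ht hu => [//|x u] ht hu; exfalso.
have hall : all (pred1 z) (x :: u).
  apply/allP => y hy; apply: contraT => hyz.
  have : y \in filter (predC1 z) (x :: u) by rewrite mem_filter /= hyz hy.
  by rewrite hu.
move: hall => /= /andP [/eqP hx hall]; subst x.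
case: u ht hall hu => [|y u] ht hall _.
  by move: hn; rewrite ht /= nozz_zz.
move: hall => /= /andP [/eqP hy _]; subst y.
by move: hn; rewrite ht /= nozz_zz.
Qed.

Lemma map_split (w : seq T) p s : map e w = p ++ s ->
  exists p' s', [/\ w = p' ++ s', map e p' = p & map e s' = s].
Proof.
move=> h; exists (take (size p) w), (drop (size p) w); split.
- by rewrite cat_take_drop.
- by rewrite map_take h take_size_cat.
- by rewrite map_drop h drop_size_cat.
Qed.

Lemma sf_map w : square_free w -> square_free (map e w).
Proof.
move/sfP=> h; apply/sfP => p u q hm.
have [p' [r [hw _ hr]]] := map_split hm.
have [u1 [r2 [hr' hu1 hr2]]] := map_split hr.
have [u2 [q' [hr2' hu2 _]]] := map_split hr2.
have e12 : u1 = u2 by apply: (inj_map e_inj); rewrite hu1 hu2.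
subst u2; have := h p' u1 q'.
rewrite hw hr' hr2' => /(_ erefl) hu; by rewrite -hu1 hu.
Qed.

Definition tc n (s : seq U) : n.-tuple U := insubd (nseq_tuple n z) s.
Lemma val_tc n s : size s = n -> tval (tc n s) = s.
Proof. by move=> h; rewrite /tc val_insubd h eqxx. Qed.

Definition valid n (b : seq bool) := size b + count id b == n.

Definition Iset n (b : seq bool) : {set n.-tuple U} :=
  [set tc n (ins (tval w) b) | w : (size b).-tuple T in [set w : (size b).-tuple T | square_free w]].

Lemma card_I n b : valid n b -> #|Iset n b| = sfc T (size b).
Proof.
move=> /eqP hv; rewrite card_in_imset // => w1 w2 _ _ /(congr1 (@tval _ _)).
rewrite !val_tc ?size_ins ?size_tuple // => /(congr1 (filter (predC1 z))).
rewrite !filter_ins ?size_tuple // => /(inj_map e_inj) h.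
exact: val_inj.
Qed.

Lemma I_sub n b : valid n b -> Iset n b \subset [set t : n.-tuple U | square_free t].
Proof.
move=> /eqP hv; apply/subsetP => t /imsetP [w]; rewrite !inE => hw ->.
rewrite val_tc ?size_ins ?size_tuple //.
apply: sf_of_filter; first exact: nozz_ins.
by rewrite filter_ins ?size_tuple //; apply: sf_map.
Qed.

Lemma I_mem n b t : valid n b -> t \in Iset n b -> dec t = b.
Proof.
move=> /eqP hv /imsetP [w _ ->]; rewrite val_tc ?size_ins ?size_tuple //.
by rewrite dec_ins // size_tuple.
Qed.

Lemma bigcup_seqP n (F : seq bool -> {set n.-tuple U}) bs t :
  t \in \bigcup_(b <- bs) F b -> exists2 b, b \in bs & t \in F b.
Proof.
elim: bs => [|b bs IH]; first by rewrite big_nil inE.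
rewrite big_cons inE => /orP [h|/IH [j hj ht]]; first by exists b; rewrite ?inE ?eqxx.
by exists j; rewrite // inE hj orbT.
Qed.

Lemma union_card n bs : uniq bs -> all (valid n) bs ->
  #|\bigcup_(b <- bs) Iset n b| = sumn [seq sfc T (size b) | b <- bs].
Proof.
elim: bs => [|b bs IH] /=; first by rewrite big_nil cards0.
case/andP => hb hu /andP [vb va]; rewrite big_cons cardsU IH // card_I //.
suff -> : Iset n b :&: \bigcup_(j <- bs) Iset n j = set0 by rewrite cards0 subn0.
apply/setP => t; rewrite !inE; apply/negP => /andP [ht /bigcup_seqP [j hj ht']].
have := I_mem vb ht; rewrite (I_mem _ ht') => [hjb|]; last by move/allP: va; apply.
by subst j; rewrite hj in hb.
Qed.

Lemma sum_le_sfc n bs : uniq bs -> all (valid n) bs ->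
  sumn [seq sfc T (size b) | b <- bs] <= sfc U n.
Proof.
move=> hu hv; rewrite -(union_card hu hv); apply: subset_leq_card.
apply/subsetP => t /bigcup_seqP [b hb]; apply/subsetP; apply: I_sub.
by move/allP: hv; apply.
Qed.
End Ins.

Fixpoint toks n : seq (seq bool) :=
  match n with
  | 0 => [:: [::]]
  | m.+1 => match m with
            | 0 => [:: [:: false]]
            | k.+1 => [seq rcons b false | b <- toks m] ++ [seq rcons b true | b <- toks k]
            end
  end.

Lemma toks_SS n : toks n.+2 = [seq rcons b false | b <- toks n.+1] ++ [seq rcons b true | b <- toks n].
Proof. by []. Qed.

Lemma toks_ok n : all (valid n) (toks n) && uniq (toks n).
Proof.
suff H : forall n, (all (valid n) (toks n) && uniq (toks n)) /\
                   (all (valid n.+1) (toks n.+1) && uniq (toks n.+1)) by case: (H n).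
move=> {}n; elim: n => [|n [/andP [v1 u1] /andP [v2 u2]]]; first by [].
split; first by apply/andP.
rewrite toks_SS all_cat !all_map cat_uniq !map_inj_uniq ?u1 ?u2; try exact: rcons_injl.
apply/andP; split.
  apply/andP; split.
- apply/allP => b hb /=; move/allP: v2 => /(_ b hb); rewrite /valid size_rcons -cats1 count_cat /=.
  move/eqP => <-; apply/eqP; lia.
- apply/allP => b hb /=; move/allP: v1 => /(_ b hb); rewrite /valid size_rcons -cats1 count_cat /=.
  move/eqP => <-; apply/eqP; lia.
rewrite /= andbT; apply/hasPn => c /mapP [b _ ->]; apply/negP => /mapP [b' _ /(congr1 (last false))].
by rewrite !last_rcons.
Qed.

Lemma toks_valid n : all (valid n) (toks n).
Proof. by case/andP: (toks_ok n). Qed.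
Lemma toks_uniq n : uniq (toks n).
Proof. by case/andP: (toks_ok n). Qed.

Lemma ins_count k n : sumn [seq omega_minus (size b) k | b <- toks n] <= omega_minus n k.+1.
Proof.
have einj : injective (widen_ord (leqnSn k)) by move=> a b /(congr1 val) /= h; apply: val_inj.
have ez : forall a : 'I_k, widen_ord (leqnSn k) a != ord_max.
  by move=> a; rewrite -(inj_eq val_inj) /= neq_ltn ltn_ord.
exact: (sum_le_sfc einj ez (toks_uniq n) (toks_valid n)).
Qed.

Local Open Scope R_scope.

Lemma INR_mulnE m n : INR (m * n)%N = INR m * INR n.
Proof. by rewrite -mult_INR. Qed.
Lemma INR_addnE m n : INR (m + n)%N = INR m + INR n.
Proof. by rewrite -plus_INR. Qed.

Section Fekete.
Variable b : nat -> R.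
Hypothesis b0 : b 0%N = 0.
Hypothesis bpos : forall n, 0 <= b n.
Hypothesis bsub : forall m n, b (m + n)%N <= b m + b n.

Lemma b_iter q t r : b (t * q + r)%N <= INR t * b q + b r.
Proof.
elim: t => [|t IH]; first by rewrite mul0n add0n /=; lra.
rewrite mulSn -addnA S_INR.
apply: Rle_trans (bsub _ _) _; lra.
Qed.

Lemma b_lin r : b r <= INR r * b 1%N.
Proof.
elim: r => [|r IH]; first by rewrite b0 /=; lra.
rewrite -addn1 addnC INR_addnE /=; apply: Rle_trans (bsub _ _) _; lra.
Qed.

Lemma b_bound q n : (0 < q)%N -> b n <= INR (n %/ q)%N * b q + INR q * b 1%N.
Proof.
move=> hq; rewrite {1}(divn_eq n q); apply: Rle_trans (b_iter _ _ _) _.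
apply: Rplus_le_compat_l; apply: Rle_trans (b_lin _) _.
apply: Rmult_le_compat_r => //; apply: le_INR; apply/leP; exact: ltnW (ltn_pmod _ hq).
Qed.

Definition u n := b n / INR n.

Lemma u_bound q n : (0 < q)%N -> (0 < n)%N -> u n <= u q + INR q * b 1%N / INR n.
Proof.
move=> hq hn; rewrite /u.
have Hn : 0 < INR n by apply: lt_0_INR; apply/ltP.
have Hq : 0 < INR q by apply: lt_0_INR; apply/ltP.
have hdq : INR (n %/ q)%N * INR q <= INR n.
  rewrite -INR_mulnE; apply: le_INR; apply/leP; exact: leq_trunc_div.
have := b_bound n hq => h.
apply: Rle_trans (_ : (INR (n %/ q)%N * b q + INR q * b 1%N) / INR n <= _).
  by apply: Rmult_le_compat_r => //; left; apply: Rinv_0_lt_compat.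
rewrite /Rdiv Rmult_plus_distr_r; apply: Rplus_le_compat_r.
have hbq := bpos q.
have -> : INR (n %/ q)%N * b q * / INR n = (INR (n %/ q)%N * INR q / INR n) * (b q / INR q).
  by field; lra.
apply: Rle_trans (_ : _ <= 1 * (b q / INR q)) _; last by rewrite Rmult_1_l; right.
apply: Rmult_le_compat_r.
  by apply: Rmult_le_pos => //; left; apply: Rinv_0_lt_compat.
apply: (Rmult_le_reg_r (INR n)) => //; rewrite /Rdiv Rmult_assoc Rinv_l; lra.
Qed.

Lemma fekete : exists L : R, is_lim_seq u L /\ forall n, (0 < n)%N -> L <= u n.
Proof.
pose E r := exists n, (0 < n)%N /\ r = u n.
have u_pos : forall n, 0 <= u n.
  move=> n; rewrite /u; case: n => [|n]; first by rewrite b0 /Rdiv Rmult_0_l; lra.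
  apply: Rmult_le_pos => //; left; apply: Rinv_0_lt_compat; apply: lt_0_INR; lia.
have [hlb hglb] := Glb_Rbar_correct E.
have lb0 : Rbar_le (Rbar.Finite 0) (Glb_Rbar E).
  by apply: hglb => x [n [_ ->]]; apply: u_pos.
have ub1 : Rbar_le (Glb_Rbar E) (u 1%N) by apply: hlb; exists 1%N.
case HG : (Glb_Rbar E) lb0 ub1 => [L| |] //= lb0 ub1.
rewrite HG in hlb hglb.
have Lle : forall n, (0 < n)%N -> L <= u n by move=> n hn; apply: (hlb (u n)); exists n.
exists L; split => //.
apply/is_lim_seq_spec => eps.
have [q [hq hq']] : exists q, (0 < q)%N /\ u q < L + eps / 2.
  apply: NNPP => H.
  have : Rbar_le (Rbar.Finite (L + eps / 2)) (Rbar.Finite L).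
    apply: hglb => x [n [hn ->]] /=.
    apply: Rnot_lt_le => hl; apply: H; by exists n.
  move=> /= h; have := cond_pos eps; lra.
have hlim : is_lim_seq (fun n => INR q * b 1%N / INR n) 0.
  have := is_lim_seq_div (fun _ => INR q * b 1%N) INR (INR q * b 1%N) p_infty 0
     (is_lim_seq_const _) is_lim_seq_INR ltac:(by []) (is_Rbar_div_p_infty _).
  by [].
move/is_lim_seq_spec: hlim => /(_ (pos_div_2 eps)) [N HN].
exists (N.+1)%N => n hn.
have hn0 : (0 < n)%N by apply/ltP; lia.
have := HN n ltac:(lia); rewrite Rminus_0_r /= => h1.
have h2 := u_bound hq hn0.
have h3 := Lle n hn0.
apply: Rabs_def1; first by have := Rle_abs (INR q * b 1%N / INR n); lra.
have := cond_pos eps; lra.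
Qed.
End Fekete.

Local Open Scope R_scope.

Definition us x n := ln (INR (omega_minus n x)) / INR n.

Lemma omega0 x : omega_minus 0 x = 1%N.
Proof. by rewrite omegaE sfc0. Qed.

Lemma omega_submult x m n : (omega_minus (m + n) x <= omega_minus m x * omega_minus n x)%N.
Proof. by rewrite !omegaE sfc_submult. Qed.

Lemma exp_le x y : x <= y -> exp x <= exp y.
Proof. by case=> [h|->]; [left; apply: exp_increasing | right]. Qed.

Lemma exp_le_inv x y : exp x <= exp y -> x <= y.
Proof. by move=> h; apply: Rnot_lt_le => hl; have := exp_increasing _ _ hl; lra. Qed.

Lemma INR_pos n : (0 < n)%N -> 0 < INR n.
Proof. by move=> h; apply: lt_0_INR; apply/ltP. Qed.

Lemma INR_leq m n : (m <= n)%N -> INR m <= INR n.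
Proof. by move=> h; apply: le_INR; apply/leP. Qed.

Lemma valid_fekete x : (forall n, (0 < omega_minus n x)%N) ->
  is_lim_seq (us x) (s_minus x) /\ forall n, (0 < n)%N -> s_minus x <= us x n.
Proof.
move=> hv.
pose b n := ln (INR (omega_minus n x)).
have b0 : b 0%N = 0 by rewrite /b omega0 /= ln_1.
have bpos : forall n, 0 <= b n.
  move=> n; rewrite /b -ln_1; apply: ln_le; first lra.
  by apply: (INR_leq (m := 1%N)).
have bsub : forall m n, b (m + n)%N <= b m + b n.
  move=> m n; rewrite /b -ln_mult; try (apply: INR_pos; apply: hv).
  apply: ln_le; first by apply: INR_pos; apply: hv.
  by rewrite -mult_INR; apply: INR_leq; apply: omega_submult.
have [L [hL hle]] := fekete b0 bpos bsub.
have e : s_minus x = L.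
  by rewrite /s_minus (is_lim_seq_unique _ _ hL).
by rewrite e; split.
Qed.

Lemma powE a n : Nat.pow a n = (a ^ n)%N.
Proof. by elim: n => //= n ->; rewrite expnS. Qed.

Lemma omega_le_pow x n : (omega_minus n x <= x ^ n)%N.
Proof.
rewrite omegaE /sfc; apply: leq_trans (max_card _) _.
by rewrite card_tuple card_ord.
Qed.

Lemma omega_upper x n : (omega_minus n.+1 x <= (x.-1) ^ n * x)%N.
Proof.
elim: n => [|n IH]; first by rewrite expn0 mul1n; have := omega_le_pow x 1; rewrite expn1.
rewrite !omegaE; apply: leq_trans (sfc_upper _ _) _.
by rewrite card_ord expnS -mulnA leq_mul2l -omegaE IH orbT.
Qed.

Lemma lim_c_div c : is_lim_seq (fun n => c / INR n.+1) 0.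
Proof.
have h := is_lim_seq_div (fun _ => c) INR c p_infty 0
     (is_lim_seq_const _) is_lim_seq_INR ltac:(by []) (is_Rbar_div_p_infty _).
by move/is_lim_seq_incr_1: h.
Qed.

Lemma upper x : (3 <= x)%N -> (forall n, (0 < omega_minus n x)%N) ->
  s_minus x <= ln (INR x.-1).
Proof.
move=> hx hv; have [hlim _] := valid_fekete hv.
move/is_lim_seq_incr_1: hlim => hlim.
pose L1 := ln (INR x.-1); pose L2 := ln (INR x).
have hv' : is_lim_seq (fun n => L1 + (L2 - L1) / INR n.+1) L1.
  have := is_lim_seq_plus' _ _ _ _ (is_lim_seq_const L1) (lim_c_div (L2 - L1)).
  by rewrite Rplus_0_r.
have hx1 : 0 < INR x.-1 by apply: INR_pos; rewrite -subn1 subn_gt0; apply: leq_trans hx.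
have hx0 : 0 < INR x by apply: INR_pos; apply: leq_trans hx.
suff : Rbar_le (s_minus x) L1 by [].
apply: (is_lim_seq_le _ _ _ _ _ hlim hv') => n.
rewrite /us.
have hn : 0 < INR n.+1 by apply: INR_pos.
have -> : L1 + (L2 - L1) / INR n.+1 = (INR n * L1 + L2) / INR n.+1.
  by rewrite S_INR; field; rewrite -S_INR; lra.
apply: Rmult_le_compat_r; first by left; apply: Rinv_0_lt_compat.
rewrite /L1 /L2 -ln_pow // -ln_mult //; last by apply: pow_lt.
apply: ln_le; first by apply: INR_pos; apply: hv.
rewrite -pow_INR -mult_INR; apply: INR_leq; apply: leq_trans (omega_upper x n) _. by rewrite powE.
Qed.

Fixpoint rsum (l : seq R) : R := if l is x :: l' then x + rsum l' else 0.

Lemma rsum_cat l1 l2 : rsum (l1 ++ l2) = rsum l1 + rsum l2.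
Proof. elim: l1 => /= [|x l IH]; [lra | rewrite IH; lra]. Qed.

Lemma rsum_scale (T : Type) c (f : T -> R) l :
  rsum [seq c * f b | b <- l] = c * rsum [seq f b | b <- l].
Proof. elim: l => /= [|x l IH]; [lra | rewrite IH; lra]. Qed.

Lemma rsum_le (T : Type) (g : T -> R) (f : T -> nat) l :
  (forall b, g b <= INR (f b)) -> rsum [seq g b | b <- l] <= INR (sumn [seq f b | b <- l]).
Proof.
move=> h; elim: l => /= [|x l IH]; first lra.
by rewrite plus_INR; apply: Rplus_le_compat.
Qed.

Definition cR lam n := rsum [seq lam ^ size b | b <- toks n].

Lemma cR_SS lam n : cR lam n.+2 = lam * (cR lam n.+1 + cR lam n).
Proof.
rewrite /cR toks_SS map_cat rsum_cat -!map_comp.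
rewrite (eq_map (f := (fun b => lam ^ size b) \o (rcons^~ false)) (g := fun b => lam * lam ^ size b)); last by move=> b /=; rewrite size_rcons.
rewrite (eq_map (f := (fun b => lam ^ size b) \o (rcons^~ true)) (g := fun b => lam * lam ^ size b)); last by move=> b /=; rewrite size_rcons.
by rewrite !rsum_scale; ring.
Qed.

Lemma cR_lower lam mu A : 0 < mu -> 0 <= lam -> 0 <= A <= 1 -> A * mu <= lam ->
  mu * mu <= lam * (mu + 1) -> forall n, A * mu ^ n <= cR lam n.
Proof.
move=> hmu hlam hA hAm hq.
suff H : forall n, A * mu ^ n <= cR lam n /\ A * mu ^ n.+1 <= cR lam n.+1 by move=> n; case: (H n).
elim=> [|n [IH1 IH2]].
  by rewrite /cR /=; split; lra.
split => //; rewrite cR_SS.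
have hpn : 0 <= A * mu ^ n by apply: Rmult_le_pos; [lra | apply: pow_le; lra].
have : A * mu ^ n.+2 <= lam * (A * mu ^ n.+1 + A * mu ^ n).
  have -> : lam * (A * mu ^ n.+1 + A * mu ^ n) = (A * mu ^ n) * (lam * (mu + 1)) by simpl; ring.
  have -> : A * mu ^ n.+2 = (A * mu ^ n) * (mu * mu) by simpl; ring.
  by apply: Rmult_le_compat_l.
move=> h; apply: Rle_trans h _; apply: Rmult_le_compat_l => //; lra.
Qed.

Lemma exp_pow s m : exp (INR m * s) = exp s ^ m.
Proof.
elim: m => [|m IH]; first by rewrite /= Rmult_0_l exp_0.
by rewrite S_INR Rmult_plus_distr_r Rmult_1_l exp_plus IH /=; ring.
Qed.

Lemma lower_from_exp x (A mu : R) : 0 < A -> 0 < mu ->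
  (forall n, (0 < omega_minus n x)%N) ->
  (forall n, A * mu ^ n <= INR (omega_minus n x)) -> ln mu <= s_minus x.
Proof.
move=> hA hmu hv hb; have [hlim _] := valid_fekete hv.
move/is_lim_seq_incr_1: hlim => hlim.
have hw : is_lim_seq (fun n => ln mu + ln A / INR n.+1) (ln mu).
  have := is_lim_seq_plus' _ _ _ _ (is_lim_seq_const (ln mu)) (lim_c_div (ln A)).
  by rewrite Rplus_0_r.
suff : Rbar_le (ln mu) (s_minus x) by [].
apply: (is_lim_seq_le _ _ _ _ _ hw hlim) => n; rewrite /us.
have hn : 0 < INR n.+1 by apply: INR_pos.
have -> : ln mu + ln A / INR n.+1 = (ln A + INR n.+1 * ln mu) / INR n.+1 by field; lra.
apply: Rmult_le_compat_r; first by left; apply: Rinv_0_lt_compat.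
rewrite -ln_pow // -ln_mult //; last by apply: pow_lt.
by apply: ln_le; [apply: Rmult_lt_0_compat => //; apply: pow_lt | apply: hb].
Qed.

Lemma step k : (3 <= k)%N -> (forall n, (0 < omega_minus n k)%N) ->
  (forall n, (0 < omega_minus n k.+1)%N) /\ s_minus k + ln (1 + / INR k) <= s_minus k.+1.
Proof.
move=> hk hv; have [hlim hle] := valid_fekete hv.
pose s := s_minus k; pose lam := exp s.
have hk0 : 3 <= INR k by have := INR_leq hk; rewrite /=; lra.
have hkm1 : INR k.-1 = INR k - 1 by rewrite -subn1 minus_INR ?(INR_leq (m:=1%N)) //; apply/leP; apply: leq_trans hk.
have hlam : 0 < lam by apply: exp_pos.
have hlamk : lam <= INR k - 1.
  rewrite -hkm1 -(exp_ln (INR k.-1)); last lra.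
  by apply: exp_le; apply: upper.
have ham : forall m, lam ^ m <= INR (omega_minus m k).
  case=> [|m]; first by rewrite omega0 /=; lra.
  rewrite /lam -exp_pow -(exp_ln (INR (omega_minus m.+1 k))); last by apply: INR_pos.
  apply: exp_le; have := hle m.+1 isT; rewrite /us => h.
  have hm : 0 < INR m.+1 by apply: INR_pos.
  apply: (Rmult_le_reg_r (/ INR m.+1)); first by apply: Rinv_0_lt_compat.
  rewrite Rmult_comm -Rmult_assoc Rinv_l ?Rmult_1_l; [exact: h | lra].
pose t := / INR k.
have ht : 0 < t by apply: Rinv_0_lt_compat; lra.
have hkt : INR k * t = 1 by rewrite /t Rinv_r; lra.
pose mu := lam * (1 + t); pose A := / (1 + t).
have hmu : 0 < mu by apply: Rmult_lt_0_compat; lra.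
have hA : 0 < A by apply: Rinv_0_lt_compat; lra.
have hA1 : A <= 1.
  rewrite /A -Rinv_1; apply: Rinv_le_contravar; lra.
have hAm : A * mu <= lam by rewrite /A /mu; right; field; lra.
have hq : mu * mu <= lam * (mu + 1).
  have e : lam * (mu + 1) - mu * mu = lam * (1 - lam * (1 + t) * t) by rewrite /mu; ring.
  suff : 0 <= lam * (1 - lam * (1 + t) * t) by lra.
  apply: Rmult_le_pos; first lra.
  have h1 : lam * (1 + t) * t <= (INR k - 1) * (1 + t) * t.
    by apply: Rmult_le_compat_r; [lra | apply: Rmult_le_compat_r; lra].
  have h2 : (INR k - 1) * (1 + t) * t = 1 - t * t.
    have -> : (INR k - 1) * (1 + t) * t = (INR k * t) * (1 + t) - t * (1 + t) by ring.
    rewrite hkt; ring.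
  have : 0 <= t * t by apply: Rmult_le_pos; lra.
  lra.
have hlow : forall n, A * mu ^ n <= INR (omega_minus n k.+1).
  move=> n; apply: Rle_trans (cR_lower hmu (Rlt_le _ _ hlam) (conj (Rlt_le _ _ hA) hA1) hAm hq n) _.
  apply: Rle_trans (_ : _ <= INR (sumn [seq omega_minus (size b) k | b <- toks n])) _.
    by apply: rsum_le.
  by apply: INR_leq; apply: ins_count.
have hv' : forall n, (0 < omega_minus n k.+1)%N.
  move=> n; have := hlow n; have : 0 < A * mu ^ n by apply: Rmult_lt_0_compat => //; apply: pow_lt.
  move=> h1 h2; apply/ltP; apply: INR_lt; rewrite /=; lra.
split => //.
have := lower_from_exp hA hmu hv' hlow.
by rewrite /mu ln_mult ?ln_exp //; lra.
Qed.

Lemma ln_ineq k : (0 < k)%N -> ln 2 / INR k <= ln (1 + / INR k).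
Proof.
move=> hk; have hk0 := INR_pos hk.
have ht : 0 < / INR k by apply: Rinv_0_lt_compat.
have hp := poly k (/ INR k) ht.
have h2 : ln 2 <= INR k * ln (1 + / INR k).
  rewrite -ln_pow; last lra.
  apply: ln_le; first lra.
  by rewrite Rinv_r in hp; lra.
apply: (Rmult_le_reg_l (INR k)) => //.
have -> : INR k * (ln 2 / INR k) = ln 2 by field; lra.
exact: h2.
Qed.

Lemma ln0 : ln 0 = 0.
Proof. rewrite /ln; case: Rlt_dec => // h; exfalso; lra. Qed.

Lemma zero_case : ~ (forall n, (0 < omega_minus n 3)%N) -> s_minus 3 = 0.
Proof.
move=> H.
have [N hN] : exists N, omega_minus N 3 = 0%N.
  apply: NNPP => H'; apply: H => n; rewrite lt0n; apply/eqP => h; apply: H'; by exists n.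
have hz : forall n, (N <= n)%N -> omega_minus n 3 = 0%N.
  move=> n hn; apply/eqP; rewrite -leqn0 -(subnKC hn).
  by apply: leq_trans (omega_submult _ _ _) _; rewrite hN.
have hl : is_lim_seq (us 3) 0.
  apply: (is_lim_seq_ext_loc (fun _ => 0)); last exact: is_lim_seq_const.
  exists N => n hn; rewrite /us hz; last by apply/leP.
  by rewrite /= ln0 /Rdiv Rmult_0_l.
by rewrite /s_minus (is_lim_seq_unique _ _ hl).
Qed.

Lemma s4 : (forall n, (0 < omega_minus n 4)%N) /\ ln 2 <= s_minus 4.
Proof.
have h2 : forall n, (2 ^ n <= omega_minus n 4)%N.
  by move=> n; rewrite omegaE; apply: sfc_exp2; rewrite card_ord.
have hv : forall n, (0 < omega_minus n 4)%N.
  by move=> n; apply: leq_trans (h2 n); rewrite expn_gt0.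
split => //.
have := lower_from_exp (A := 1) (mu := 2) ltac:(lra) ltac:(lra) hv.
apply => n; rewrite Rmult_1_l.
have -> : 2 = INR 2 by [].
by rewrite -pow_INR; apply: INR_leq; rewrite powE.
Qed.

Lemma base4 : (forall n, (0 < omega_minus n 4)%N) /\ s_minus 3 + ln 2 * / INR 3 <= s_minus 4.
Proof.
have [hv4 h4] := s4; split => //.
have hl3 := ln_ineq (k := 3) isT.
case: (classic (forall n, (0 < omega_minus n 3)%N)) => hv3.
  have [_ h] := step (k := 3) isT hv3; rewrite /Rdiv in hl3; lra.
rewrite zero_case //.
have hl2 : 0 < ln 2 by rewrite -ln_1; apply: ln_increasing; lra.
have h3 : / INR 3 <= 1 by rewrite -Rinv_1; apply: Rinv_le_contravar; rewrite /=; lra.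
have : ln 2 * / INR 3 <= ln 2 * 1 by apply: Rmult_le_compat_l; lra.
lra.
Qed.

Lemma main_ind d :
  (forall n, (0 < omega_minus n (d + 4))%N) /\
  s_minus 3 + ln 2 * sum_n_m (fun k => / INR k) 3 (d + 4 - 1)%N <= s_minus (d + 4).
Proof.
elim: d => [|d [hv IH]].
  rewrite add0n (_ : (4 - 1)%N = 3%N) //. rewrite sum_n_n; exact: base4.
have e1 : (d.+1 + 4 - 1 = (d + 4 - 1).+1)%N by clear; lia.
have hk : (3 <= d + 4)%N by clear; lia.
rewrite addSn; have [hv' hs] := step hk hv; split => //.
rewrite -addSn e1 sum_n_Sm; last by clear; lia.
have -> : (d + 4 - 1).+1 = (d + 4)%N by clear; lia.
have hl := ln_ineq (k := (d + 4)%N) ltac:(by rewrite addn4).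
rewrite /plus /= Rmult_plus_distr_l; rewrite /Rdiv in hl.
rewrite addSn.
lra.
Qed.

Theorem theorem2 (x : nat) (hx : (3 < x)%N) :
  let eps := s_minus 3 in
  (eps + ln 2 * sum_n_m (fun k => / INR k) 3 (x - 1)%N <= s_minus x
   /\ s_minus x <= ln (INR (x - 1)%N))%R.
Proof.
move=> eps; have [hv h] := main_ind (x - 4).
rewrite subnK in hv h => //; split => //.
by rewrite subn1; apply: upper => //; apply: ltnW.
Qed.
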